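(* Consider the following setting. $\mathcal{G}$ is a connected undirected graph with nodes $\{1,\dots,n\}$, edges $\{1,\dots,m\}$ and incidence matrix $B\in\mathbb{R}^{n\times m}$; $p\ge1$ and $E=\begin{bmatrix} I_{p}\\ \mathbf{0}_{(n-p)\times p}\end{bmatrix}$. Let $T_x\in\mathbb{R}^{n\times n}$, $T_\mu,T_\xi\in\mathbb{R}^{m\times m}$, $T_\theta,T_\phi\in\mathbb{R}^{p\times p}$ be diagonal with strictly positive diagonal entries, $d\in\mathbb{R}^n$ a constant vector, $h(x)=(h_1(x_1),\dots,h_n(x_n))^T$ with each $h_i:\mathbb{R}\to\mathbb{R}$ continuously differentiable and strictly increasing, and $\overline y\in\mathbb{R}^n$ with $\overline y_i\in\mathcal{R}(h_i)$ for all $i$. Let $f(\mu)=(f_1(\mu_1),\dots,f_m(\mu_m))^T$ and $g(\theta)=(g_1(\theta_1),\dots,g_p(\theta_p))^T$ with $f_k,g_i:\mathbb{R}\to\mathbb{R}$. Let $Q=\operatorname{diag}(q_1,\dots,q_p)$, $q_i>0$, $r\in\mathbb{R}^p$, and let $L^{com}\in\mathbb{R}^{p\times p}$ be the Laplacian matrix of a weighted directed graph on $\{1,\dots,p\}$ that is balanced and strongly connected. Define $\overline u=Q^{-1}(\kappa-r)$ with $\kappa=E^T\frac{\mathbb{1}_n\mathbb{1}_n^T}{\mathbb{1}_p^TQ^{-1}\mathbb{1}_p}(d+EQ^{-1}r)$, and assume that there exists $\omega\in\mathbb{R}^m$ with $[B^\dagger(E\overline u-d)+(I-B^\dagger B)\omega]_k\in\mathcal{R}(f_k)$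 for all $k$, and that $\overline u_i\in\mathcal{R}(g_i)$ for all $i\in\{1,\dots,p\}$. Consider the closed-loop system $$\begin{aligned} T_x\dot x&=-Bf(\mu)+Eg(\theta)-d,\\ T_\mu\dot\mu&=B^T(h(x)-\overline y)-(f(\mu)-\xi),\\ T_\xi\dot\xi&=f(\mu)-\xi,\\ T_\theta\dot\theta&=-E^T(h(x)-\overline y)-(g(\theta)-\phi),\\ T_\phi\dot\phi&=g(\theta)-\phi-QL^{com}(Q\phi+r), \end{aligned}$$ with state $(x,\mu,\xi,\theta,\phi)\in\mathbb{R}^n\times\mathbb{R}^m\times\mathbb{R}^m\times\mathbb{R}^p\times\mathbb{R}^p$. Then this system has an equilibrium $(\overline x,\overline\mu,\overline\xi,\overline\theta,\overline\phi)$, and every equilibrium satisfies $h(\overline x)=\overline y$ and $g(\overline\theta)=\overline u$.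
   Context: $\mathcal{R}(f)$ denotes the range of a function $f$; $B^\dagger$ is the Moore–Penrose pseudoinverse of $B$; $\mathbb{1}_k$ is the all-ones vector of length $k$. The incidence matrix $B$ is obtained by arbitrarily orienting each edge: $b_{ik}=+1$ if node $i$ is the positive end of edge $k$, $-1$ if the negative end, $0$ otherwise. A weighted directed graph is balanced if at every node the weighted in-degree equals the weighted out-degree; its Laplacian is $L^{com}=D-A$ with $A$ the weighted adjacency matrix and $D$ the diagonal matrix of weighted out-degrees. The vector $\overline u$ is the minimizer of $\frac12u^TQu+r^Tu$ subject to $\mathbf{0}=-B\lambda+Eu-d$. *)

(* Defs.v *)
From HB Require Import structures.
From mathcomp Require Import all_boot all_order all_algebra.
From mathcomp Require Import all_classical all_reals all_analysis.
Set Implicit Arguments. Unset Strict Implicit. Unset Printing Implicit Defensive.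
Import Order.TTheory GRing.Theory Num.Theory.
Local Open Scope ring_scope.

Section Defs.
Variable R : realType.

Definition incidence (n m : nat) (src tgt : 'I_m -> 'I_n) : 'M[R]_(n, m) :=
  \matrix_(i, k) ((i == src k)%:R - (i == tgt k)%:R).

Definition uadj (n m : nat) (src tgt : 'I_m -> 'I_n) : rel 'I_n :=
  fun i j => [exists k, ((src k == i) && (tgt k == j)) || ((src k == j) && (tgt k == i))].

Definition simple_connected_graph (n m : nat) (src tgt : 'I_m -> 'I_n) : Prop :=
  (forall k, src k != tgt k) /\
  (forall k l, (src k == src l) && (tgt k == tgt l) || (src k == tgt l) && (tgt k == src l)
     -> k = l) /\
  (forall i j, connect (uadj src tgt) i j).

Definition is_pinv (n m : nat) (B : 'M[R]_(n, m)) (Bd : 'M[R]_(m, n)) : Prop :=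
  [/\ B *m Bd *m B = B, Bd *m B *m Bd = Bd,
      (B *m Bd)^T = B *m Bd & (Bd *m B)^T = Bd *m B].

Definition is_diag_pos (k : nat) (T : 'M[R]_k) : Prop :=
  (forall i j, i != j -> T i j = 0) /\ (forall i, 0 < T i i).

(* E = [I_p ; 0_{(n-p) x p}] *)
Definition Emat (n p : nat) : 'M[R]_(n, p) := \matrix_(i, j) ((i == j :> nat)%:R).

Definition laplacian (p : nat) (A : 'M[R]_p) : 'M[R]_p :=
  diag_mx (\row_i (\sum_j A i j)) - A.

Definition balanced_strongly_connected (p : nat) (A : 'M[R]_p) : Prop :=
  [/\ (forall i j, 0 <= A i j), (forall i, A i i = 0),
      (forall i, \sum_j A i j = \sum_j A j i) &
      (forall i j, connect (fun a b => 0 < A a b) i j)].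

Definition in_range (f : R -> R) (y : R) : Prop := exists z, f z = y.

Definition vmap (k : nat) (F : 'I_k -> R -> R) (v : 'cV[R]_k) : 'cV[R]_k :=
  \col_i F i (v i 0).

Definition ones (k : nat) : 'cV[R]_k := const_mx 1.

Definition kappa (n p : nat) (Q : 'M[R]_p) (r : 'cV[R]_p) (d : 'cV[R]_n) : 'cV[R]_p :=
  ((((ones p)^T *m invmx Q *m ones p) 0 0)^-1) *:
    ((Emat n p)^T *m (ones n *m (ones n)^T) *m (d + Emat n p *m invmx Q *m r)).

Definition ubar (n p : nat) (Q : 'M[R]_p) (r : 'cV[R]_p) (d : 'cV[R]_n) : 'cV[R]_p :=
  invmx Q *m (kappa Q r d - r).

Definition is_equilibrium (n m p : nat) (B : 'M[R]_(n, m))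
  (Tx : 'M[R]_n) (Tmu Txi : 'M[R]_m) (Ttheta Tphi : 'M[R]_p)
  (d : 'cV[R]_n) (h : 'I_n -> R -> R) (ybar : 'cV[R]_n)
  (f : 'I_m -> R -> R) (g : 'I_p -> R -> R) (Q Lcom : 'M[R]_p) (r : 'cV[R]_p)
  (x : 'cV[R]_n) (mu xi : 'cV[R]_m) (theta phi : 'cV[R]_p) : Prop :=
  let E := Emat n p in
  [/\ Tx *m 0 = - B *m vmap f mu + E *m vmap g theta - d,
      Tmu *m 0 = B^T *m (vmap h x - ybar) - (vmap f mu - xi),
      Txi *m 0 = vmap f mu - xi,
      Ttheta *m 0 = - E^T *m (vmap h x - ybar) - (vmap g theta - phi) &
      Tphi *m 0 = vmap g theta - phi - Q *m Lcom *m (Q *m phi + r)].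

End Defs.

(* Main.v *)
Require Import Defs.
From HB Require Import structures.
From mathcomp Require Import all_boot all_order all_algebra.
From mathcomp Require Import all_classical all_reals all_analysis.
From mathcomp Require Import ring lra.
Import Order.TTheory GRing.Theory Num.Theory numFieldNormedType.Exports.
Local Open Scope ring_scope.

Section Helpers.
Variable R : realType.

Lemma sum_delta {T : finType} (s : T) (F : T -> R) :
  \sum_i (i == s)%:R * F i = F s.
Proof.
rewrite (bigD1 s) //= eqxx mul1r big1 ?addr0 // => i /negbTE ->.
by rewrite mul0r.
Qed.

Lemma sum_delta' {T : finType} (s : T) (F : T -> R) :
  \sum_i F i * (i == s)%:R = F s.
Proof. by rewrite -(sum_delta s); apply: eq_bigr => i _; rewrite mulrC. Qed.

Lemma Edelta n p (pn : (p <= n)%N) (F : 'I_n -> R) (j : 'I_p) :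
  \sum_(i < n) (i == j :> nat)%:R * F i = F (widen_ord pn j).
Proof.
rewrite -(sum_delta (widen_ord pn j)); apply: eq_bigr => i _.
by [].
Qed.

Lemma inc_ker n m l (src tgt : 'I_m -> 'I_n) (X : 'M[R]_(n, l)) :
  simple_connected_graph src tgt ->
  (incidence R src tgt)^T *m X = 0 -> forall i i' j, X i j = X i' j.
Proof.
move=> [_ [_ conn]] HX i i' j.
have e k : X (src k) j = X (tgt k) j.
  have := congr1 (fun M : 'M[R]_(m, l) => M k j) HX; rewrite !mxE /=.
  under eq_bigr do rewrite !mxE mulrBl.
  rewrite sumrB sum_delta.
  have -> : \sum_i ((i == tgt k)%:R * X i j) = X (tgt k) j by apply: sum_delta.
  by move/eqP; rewrite subr_eq0 => /eqP.
move: (conn i i') => /connectP [pth Hp ->].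
elim: pth i Hp => [|a pth IH] i //= /andP [Hia Hp].
rewrite -IH //.
move: Hia => /existsP [k /orP [/andP [/eqP <- /eqP <-]|/andP [/eqP <- /eqP <-]]].
  exact: e.
by rewrite e.
Qed.

Lemma inc_colsum n m (src tgt : 'I_m -> 'I_n) (u : 'cV[R]_m) :
  \sum_i (incidence R src tgt *m u) i 0 = 0.
Proof.
under eq_bigr do rewrite mxE.
rewrite exchange_big /= big1 // => k _.
under eq_bigr do rewrite !mxE mulrBl.
rewrite sumrB.
have -> : \sum_i ((i == src k)%:R * u k 0) = u k 0 by apply: (sum_delta (src k) (fun _ => u k 0)).
have -> : \sum_i ((i == tgt k)%:R * u k 0) = u k 0 by apply: (sum_delta (tgt k) (fun _ => u k 0)).
by rewrite subrr.
Qed.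

Lemma lap_entry p (A : 'M[R]_p) i j :
  laplacian A i j = (\sum_k A i k) * (i == j)%:R - A i j.
Proof. by rewrite !mxE mulr_natr. Qed.

Lemma lap_const p (A : 'M[R]_p) (w : 'cV[R]_p) c :
  (forall j, w j 0 = c) -> laplacian A *m w = 0.
Proof.
move=> Hw; apply/matrixP => i k; rewrite !mxE (ord1 k).
under eq_bigr do rewrite lap_entry Hw mulrBl.
rewrite sumrB.
have -> : \sum_j ((\sum_k A i k) * (i == j)%:R * c) = (\sum_k A i k) * c.
  rewrite -(sum_delta i (fun j => (\sum_k A i k) * c)).
  by apply: eq_bigr => j _; rewrite (eq_sym j); ring.
by rewrite -mulr_suml subrr.
Qed.

Lemma lap_colsum p (A : 'M[R]_p) (w : 'cV[R]_p) :
  balanced_strongly_connected A -> \sum_i (laplacian A *m w) i 0 = 0.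
Proof.
move=> [_ _ bal _].
under eq_bigr do rewrite mxE.
rewrite exchange_big /= big1 // => j _.
under eq_bigr do rewrite lap_entry mulrBl.
rewrite sumrB -mulr_suml.
rewrite (sum_delta' j (fun i => \sum_k A i k)).
by rewrite -mulr_suml bal subrr.
Qed.

Lemma lap_ker p (A : 'M[R]_p) (w : 'cV[R]_p) :
  balanced_strongly_connected A -> laplacian A *m w = 0 ->
  forall i j, w i 0 = w j 0.
Proof.
move=> [Apos _ _ conn] Hw i j.
pose M := [arg max_(k > i) w k 0]%O.
have Mmax : forall k, w k 0 <= w M 0.
  rewrite /M; case: arg_maxP => // a _ H k; exact: H.
have step a b : w a 0 = w M 0 -> 0 < A a b -> w b 0 = w M 0.
  move=> Ha Hab.
  have := congr1 (fun N : 'cV[R]_p => N a 0) Hw; rewrite !mxE.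
  under eq_bigr do rewrite lap_entry mulrBl.
  rewrite sumrB.
  have -> : \sum_l ((\sum_k A a k) * (a == l)%:R * w l 0) = \sum_k A a k * w a 0.
    rewrite -mulr_suml -(sum_delta a (fun l => (\sum_k A a k) * w l 0)).
    by apply: eq_bigr => l _; rewrite (eq_sym l); ring.
  rewrite -sumrB.
  under eq_bigr do rewrite -mulrBr.
  move=> H0.
  have nn : forall k, predT k -> 0 <= A a k * (w a 0 - w k 0).
    move=> k _; apply: mulr_ge0 => //; rewrite subr_ge0 Ha; exact: Mmax.
  have Hb := psumr_eq0P nn H0 (isT : predT b).
  move: Hb => /eqP; rewrite mulf_eq0 (negbTE (lt0r_neq0 Hab)) /= subr_eq0 => /eqP.
  by move=> <-.
have all k : w k 0 = w M 0.
  move: (conn M k) => /connectP [pth Hp ->].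
  have gen : forall c, w c 0 = w M 0 ->
      path (fun a b => 0 < A a b) c pth -> w (last c pth) 0 = w M 0.
    elim: pth {Hp} => [|a pth IH] c Hc //= /andP [Hca Hp'].
    by apply: IH => //; apply: step Hc Hca.
  exact: gen.
by rewrite !all.
Qed.

Lemma pinv_proj n m (src tgt : 'I_m -> 'I_n) (Bd : 'M[R]_(m, n)) (v : 'cV[R]_n) :
  simple_connected_graph src tgt -> is_pinv (incidence R src tgt) Bd ->
  \sum_i v i 0 = 0 -> incidence R src tgt *m (Bd *m v) = v.
Proof.
set B := incidence R src tgt.
move=> G [H1 _ H3 _] Hv.
pose X : 'M[R]_n := 1%:M - B *m Bd.
have HX : B^T *m X = 0.
  rewrite /X mulmxBr mulmx1.
  have -> : B^T *m (B *m Bd) = B^T by rewrite -H3 -trmx_mul H1.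
  by rewrite subrr.
have col := @inc_ker _ _ _ _ _ X G HX.
have sym : X^T = X by rewrite /X linearB /= trmx1 H3.
have Xv : X *m v = 0.
  apply/matrixP => i k; rewrite !mxE (ord1 k).
  have -> : \sum_j X i j * v j 0 = \sum_j X i i * v j 0.
    apply: eq_bigr => j _.
    have e1 : X^T j i = X i j by rewrite mxE.
    by rewrite -e1 sym (col j i i).
  by rewrite -mulr_sumr Hv mulr0.
by move: Xv; rewrite /X mulmxBl mul1mx mulmxA => /eqP; rewrite subr_eq0 => /eqP <-.
Qed.

End Helpers.

Theorem lemma5 (R : realType) (n m p : nat) (src tgt : 'I_m -> 'I_n)
  (Bd : 'M[R]_(m, n))
  (Tx : 'M[R]_n) (Tmu Txi : 'M[R]_m) (Ttheta Tphi : 'M[R]_p)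
  (d : 'cV[R]_n) (h : 'I_n -> R -> R) (ybar : 'cV[R]_n)
  (f : 'I_m -> R -> R) (g : 'I_p -> R -> R)
  (q : 'rV[R]_p) (r : 'cV[R]_p) (A : 'M[R]_p) :
  simple_connected_graph src tgt ->
  (1 <= p)%N -> (p <= n)%N ->
  is_pinv (incidence R src tgt) Bd ->
  is_diag_pos Tx -> is_diag_pos Tmu -> is_diag_pos Txi ->
  is_diag_pos Ttheta -> is_diag_pos Tphi ->
  (forall i (x : R), derivable (h i) x 1) ->
  (forall i, continuous (derive1 (h i))) ->
  (forall i, {homo h i : a b / a < b}) ->
  (forall i, in_range (h i) (ybar i 0)) ->
  (forall i, 0 < q 0 i) ->
  balanced_strongly_connected A ->
  let B := incidence R src tgt in
  let E := Emat R n p in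
  let Q := diag_mx q in
  let ub := ubar Q r d in
  (exists w : 'cV[R]_m, forall k,
      in_range (f k) ((Bd *m (E *m ub - d) + (1%:M - Bd *m B) *m w) k 0)) ->
  (forall i, in_range (g i) (ub i 0)) ->
  (exists x mu xi theta phi,
     is_equilibrium B Tx Tmu Txi Ttheta Tphi d h ybar f g Q (laplacian A) r
       x mu xi theta phi) /\
  (forall x mu xi theta phi,
     is_equilibrium B Tx Tmu Txi Ttheta Tphi d h ybar f g Q (laplacian A) r
       x mu xi theta phi ->
     vmap h x = ybar /\ vmap g theta = ub).
Proof.
move=> G p1 pn Hpinv _ _ _ _ _ _ _ _ hy qpos Abal B E Q ub [w Hw] Hg.
pose j0 : 'I_p := Ordinal p1.
have qne j : q 0 j != 0 by apply: lt0r_neq0.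
have Qunit : Q \in unitmx.
  rewrite unitmxE det_diag unitfE; apply: lt0r_neq0; exact: prodr_gt0.
have Qmul (v : 'cV[R]_p) j : (Q *m v) j 0 = q 0 j * v j 0 by rewrite mul_diag_mx mxE.
have Qinv (v : 'cV[R]_p) j : (invmx Q *m v) j 0 = v j 0 / q 0 j.
  have := congr1 (fun N : 'cV[R]_p => N j 0) (mulKVmx Qunit v).
  by rewrite /= Qmul => <-; rewrite [X in _ = X]mulrAC divff // mul1r.
pose sQ := \sum_j (q 0 j)^-1.
have sQpos : 0 < sQ.
  rewrite /sQ (bigD1 j0) //=.
  have a : 0 < (q 0 j0)^-1 by rewrite invr_gt0.
  have b : 0 <= \sum_(i | i != j0) (q 0 i)^-1.
    by apply: sumr_ge0 => i _; rewrite invr_ge0 ltW.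
  lra.
have sQne : sQ != 0 by apply: lt0r_neq0.
have sumE (v : 'cV[R]_p) : \sum_i (E *m v) i 0 = \sum_j v j 0.
  rewrite /E; under eq_bigr do rewrite mxE.
  rewrite exchange_big /=; apply: eq_bigr => j _.
  under eq_bigr do rewrite mxE.
  exact: (@Edelta R _ _ pn (fun _ => v j 0)).

have ETmul (y : 'cV[R]_n) j : (E^T *m y) j 0 = y (widen_ord pn j) 0.
  rewrite /E mxE; under eq_bigr do rewrite !mxE.
  exact: (@Edelta R _ _ pn (fun i => y i 0)).
pose Sd := \sum_i d i 0.
pose Sr := \sum_j r j 0 / q 0 j.
pose k0 := (Sd + Sr) / sQ.
have kapE j : kappa Q r d j 0 = k0.
  rewrite /kappa mxE.
  have -> : ((ones R p)^T *m invmx Q *m ones R p) 0 0 = sQ.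
    rewrite -mulmxA mxE /sQ; apply: eq_bigr => i _.
    by rewrite Qinv !mxE mul1r div1r.
  rewrite mulrC; congr (_ / _).
  rewrite mxE.
  have J i k : (E^T *m (ones R n *m (ones R n)^T)) i k = 1.
    rewrite /E mxE; under eq_bigr do rewrite !mxE big_ord1 !mxE mulr1.
    exact: (@Edelta R _ _ pn (fun _ => 1)).
  under eq_bigr do rewrite J mul1r mxE.
  rewrite big_split /= -mulmxA sumE.
  by congr (_ + _); apply: eq_bigr => i _; rewrite Qinv.
have ubE j : ub j 0 = (k0 - r j 0) / q 0 j.
  by rewrite /ub /ubar Qinv mxE kapE mxE.
have sumub : \sum_j ub j 0 = Sd.
  under eq_bigr do rewrite ubE mulrBl.
  rewrite sumrB -mulr_sumr -/sQ /k0 divfK // -/Sr.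
  by rewrite addrK.
have sumv : \sum_i (E *m ub - d) i 0 = 0.
  under eq_bigr do rewrite mxE [(- d) _ _]mxE.
  by rewrite sumrB sumE sumub subrr.
have kconst : laplacian A *m kappa Q r d = 0 by apply: (@lap_const R _ _ _ k0).
split.
  have [xf Hxf] := choice (P := fun i z => h i z = ybar i 0) hy.
  have [tf Htf] := choice (P := fun i z => g i z = ub i 0) Hg.
  pose zv := Bd *m (E *m ub - d) + (1%:M - Bd *m B) *m w.
  have [mf Hmf] := choice (P := fun k z => f k z = zv k 0) Hw.
  pose x := \col_i xf i; pose mu := \col_k mf k; pose th := \col_i tf i.
  have hx : vmap h x = ybar.
    by apply/matrixP => i k; rewrite (ord1 k) /x !mxE Hxf.
  have fmu : vmap f mu = zv.
    by apply/matrixP => i k; rewrite (ord1 k) /mu [LHS]mxE mxE Hmf.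
  have gth : vmap g th = ub.
    by apply/matrixP => i k; rewrite (ord1 k) /th [LHS]mxE mxE Htf.
  have Bz : B *m zv = E *m ub - d.
    rewrite /zv mulmxDr pinv_proj // [B *m (_ *m w)]mulmxA [B *m (_ - _)]mulmxBr mulmx1 [B *m (Bd *m B)]mulmxA.
    by case: Hpinv => -> _ _ _; rewrite subrr mul0mx addr0.
  exists x, mu, (vmap f mu), th, ub.
  rewrite /is_equilibrium /= !mulmx0 hx fmu gth !subrr !mulmx0 subrr.
  split; rewrite ?subrr //.
  - by rewrite mulNmx Bz opprB subrK subrr.
  - have -> : Q *m ub + r = kappa Q r d by rewrite /ub /ubar mulKVmx // subrK.
    by rewrite -mulmxA kconst mulmx0 subrr.
move=> x mu xi th ph [e1 e2 e3 e4 e5].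
rewrite !mulmx0 in e1 e2 e3 e4 e5.
move/eqP: e3; rewrite eq_sym subr_eq0 => /eqP exi.
rewrite -exi subrr subr0 in e2.
pose y := vmap h x - ybar.
have yc := @inc_ker R _ _ _ _ _ y G (esym e2).
pose c := y (widen_ord pn j0) 0.
move/eqP: e4; rewrite eq_sym subr_eq0 => /eqP e4.
move/eqP: e5; rewrite eq_sym subr_eq0 => /eqP e5.
have gpj j : (vmap g th - ph) j 0 = - c.
  by rewrite -e4 mulNmx mxE ETmul /c (yc _ (widen_ord pn j0)).
pose z := Q *m ph + r.
have Lz j : (laplacian A *m z) j 0 = - c / q 0 j.
  have := gpj j; rewrite e5 -mulmxA Qmul => <-.
  by rewrite [X in _ = X]mulrAC divff // mul1r.
have c0 : c = 0.
  have := @lap_colsum R _ A z Abal.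
  under eq_bigr do rewrite Lz.
  rewrite -mulr_sumr -/sQ => /eqP; rewrite mulf_eq0 (negbTE sQne) orbF oppr_eq0.
  by move/eqP.
have y0 : y = 0.
  by apply/matrixP => i k; rewrite (ord1 k) (yc _ (widen_ord pn j0)) -/c c0 mxE.
have hx : vmap h x = ybar by apply/eqP; rewrite -subr_eq0 -/y y0.
split => //.
rewrite -/y y0 mulmx0 in e4.
move/eqP: e4; rewrite eq_sym subr_eq0 => /eqP gph.
rewrite gph.
have Lz0 : laplacian A *m z = 0.
  have := congr1 (mulmx (invmx Q)) e5.
  by rewrite gph subrr mulmx0 -mulmxA mulKmx.
pose al := z j0 0.
have phE j : ph j 0 = (al - r j 0) / q 0 j.
  have := @lap_ker R _ A z Abal Lz0 j j0; rewrite -/al /z mxE Qmul => <-.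
  by rewrite addrK [X in _ = X]mulrAC divff // mul1r.
have sph : \sum_j ph j 0 = Sd.
  move/eqP: e1; rewrite mulNmx eq_sym -addrA addrC subr_eq0 => /eqP e1.
  have := congr1 (fun v : 'cV[R]_n => \sum_i v i 0) e1.
  rewrite /= inc_colsum.
  under eq_bigr do rewrite mxE [(- d) _ _]mxE.
  by rewrite sumrB sumE gph => /eqP; rewrite subr_eq0 => /eqP.
have alk : al = k0.
  move: sph; under eq_bigr do rewrite phE mulrBl.
  rewrite sumrB -mulr_sumr -/sQ -/Sr /k0 => <-.
  by rewrite subrK mulfK.
by apply/matrixP => j k; rewrite (ord1 k) phE ubE alk.
Qed.
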